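(* Let $L$ be a co-Heyting algebra and let $(a_n)_{n<\omega},(b_n)_{n<\omega},(c_n)_{n<\omega}$ be sequences in $L$ with $c_n\le b_n\le a_n$ for every $n$. If $(a_n)$ and $(c_n)$ both converge to the same $l\in L$ for the codimetric pseudometric, then $(b_n)$ converges to $l$.
   Context: A co-Heyting algebra is a bounded distributive lattice $(L,0,1,\vee,\wedge)$ such that $a-b=\min\{c\in L: a\le b\vee c\}$ exists for all $a,b$. Let $a\triangle b=(a-b)\vee(b-a)$. $\operatorname{Spec}L$ is the set of prime filters ordered by inclusion; height = foundation rank there; $\operatorname{codim}_La=\min\{\operatorname{height}\mathfrak p: a\in\mathfrak p\}$ ($+\infty$ if none). The codimetric pseudometric is $\operatorname{dist}_L(a,b)=2^{-\operatorname{codim}_L(a\triangle b)}$ if finite and $0$ otherwise; $(x_n)$ converges to $y$ iff $\operatorname{dist}_L(x_n,y)\to0$. *)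

(* Defs.v *)
From HB Require Import structures.
From mathcomp Require Import all_boot all_order.
From Stdlib Require Import Reals ClassicalEpsilon.
Set Implicit Arguments. Unset Strict Implicit. Unset Printing Implicit Defensive.
Import Order.TTheory.
Local Open Scope order_scope.

Section CoHeyting.
Context {disp : Order.disp_t} {L : tbDistrLatticeType disp}.

Definition is_coheyting_sub (sub : L -> L -> L) : Prop :=
  forall a b : L, a <= b `|` sub a b /\ (forall c : L, a <= b `|` c -> sub a b <= c).

Definition symdiff (sub : L -> L -> L) (a b : L) : L := sub a b `|` sub b a.

Record prime_filter (p : L -> Prop) : Prop := {
  pf_top : p \top;
  pf_proper : ~ p \bot;
  pf_up : forall x y : L, p x -> x <= y -> p y;
  pf_meet : forall x y : L, p x -> p y -> p (x `&` y);
  pf_prime : forall x y : L, p (x `|` y) -> p x \/ p y }.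

Definition strict_incl (q p : L -> Prop) : Prop :=
  (forall x, q x -> p x) /\ exists x, p x /\ ~ q x.

(* height_ge p n : the foundation rank of p in Spec L is >= n (finite n). *)
Fixpoint height_ge (p : L -> Prop) (n : nat) : Prop :=
  match n with
  | O => True
  | S m => exists q, prime_filter q /\ strict_incl q p /\ height_ge q m
  end.

(* codim_L a = n (finite): the minimum of the heights of the prime
   filters containing a is exactly n. *)
Definition codim_eq (a : L) (n : nat) : Prop :=
  (forall p, prime_filter p -> p a -> height_ge p n) /\
  (exists p, prime_filter p /\ p a /\ ~ height_ge p (S n)).

Definition cdist (sub : L -> L -> L) (a b : L) : R :=
  match excluded_middle_informative (exists n, codim_eq (symdiff sub a b) n) with
  | left H => (/ 2 ^ (proj1_sig (constructive_indefinite_description _ H)))%R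
  | right _ => 0%R
  end.

Definition cconverges (sub : L -> L -> L) (x : nat -> L) (y : L) : Prop :=
  Un_cv (fun n => cdist sub (x n) y) 0%R.

End CoHeyting.

(* Main.v *)
Require Import Defs.
From HB Require Import structures.
From mathcomp Require Import all_boot all_order.
From Stdlib Require Import Reals Lra Lia Classical ClassicalEpsilon.
Import Order.TTheory.

Set Implicit Arguments.
Section Aux.
Context {disp : Order.disp_t} {L : tbDistrLatticeType disp}.
Local Open Scope order_scope.

Lemma height_ge_S (p : L -> Prop) n : height_ge p (S n) -> height_ge p n.
Proof.
  elim: n p => [//|n IH] p /= [q [Hq [Hs Hh]]].
  exists q; split => //; split => //; exact: IH.
Qed.

Lemma height_ge_le (p : L -> Prop) n m : (leq m n) -> height_ge p n -> height_ge p m.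
Proof.
  move=> H; elim: n H => [|n IH] H.
    by rewrite leqn0 in H; move/eqP: H => ->.
  rewrite leq_eqVlt in H; case/orP: H => [/eqP -> //|H] Hh.
  apply: IH => //; exact: height_ge_S.
Qed.

Definition Pc (x : L) (N : nat) := forall p, prime_filter p -> p x -> height_ge p N.

Lemma P_le x N M : (leq M N) -> Pc x N -> Pc x M.
Proof. move=> H HP p Hp Hx; exact: (height_ge_le _ _ _ H (HP p Hp Hx)). Qed.

Lemma cdist_ge0 sub (x y : L) : (0 <= cdist sub x y)%R.
Proof.
  rewrite /cdist; destruct excluded_middle_informative; last lra.
  apply: Rlt_le; apply: Rinv_0_lt_compat; apply: pow_lt; lra.
Qed.

Lemma codim_ge x n N : codim_eq x n -> Pc x N -> (leq N n).
Proof.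
  move=> [_ [p [Hp [Hx Hn]]]] HP.
  have := HP p Hp Hx; case: (leqP N n) => // Hlt HN.
  exfalso; apply: Hn; exact: (height_ge_le _ _ _ Hlt HN).
Qed.

Lemma pow2_mono n N : (leq N n) -> (/ 2 ^ n <= / 2 ^ N)%R.
Proof.
  move=> H; apply: Rinv_le_contravar; first (apply: pow_lt; lra).
  apply: Rle_pow; first lra. by apply/ssrnat.leP.
Qed.

Lemma P_dist sub x y N : Pc (symdiff sub x y) N -> (cdist sub x y <= / 2 ^ N)%R.
Proof.
  move=> HP; rewrite /cdist; destruct excluded_middle_informative as [H|H].
    case: constructive_indefinite_description => n Hn /=.
    apply: pow2_mono; exact: codim_ge Hn HP.
  apply: Rlt_le; apply: Rinv_0_lt_compat; apply: pow_lt; lra.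
Qed.

Lemma dist_P sub x y N : (cdist sub x y < / 2 ^ N)%R -> Pc (symdiff sub x y) N.
Proof.
  rewrite /cdist; destruct excluded_middle_informative as [H|H].
    case: constructive_indefinite_description => n [Hn _] /= Hlt.
    apply: (@P_le _ n N _ Hn); case: (leqP N n) => // Hnl.
    exfalso; have := @pow2_mono N n (ltnW Hnl); lra.
  move=> _; elim: N => [|m IH]; first by move=> p.
  apply: NNPP => HnP; apply: H; exists m; split => //.
  apply: NNPP => Hne; apply: HnP => p Hp Hx.
  apply: NNPP => Hh; apply: Hne; by exists p.
Qed.

Lemma P_join x y z N : x <= y `|` z -> Pc y N -> Pc z N -> Pc x N.
Proof.
  move=> Hle Hy Hz p Hp Hx.
  have := pf_prime Hp (pf_up Hp Hx Hle); case; [exact: Hy|exact: Hz].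
Qed.

Lemma symdiff_le sub (hsub : is_coheyting_sub sub) (a b c l : L) :
  c <= b -> b <= a -> symdiff sub b l <= symdiff sub a l `|` symdiff sub c l.
Proof.
  move=> Hcb Hba.
  have h1 : sub b l <= sub a l.
    apply: (proj2 (hsub b l)); apply: le_trans Hba _; exact: (proj1 (hsub a l)).
  have h2 : sub l b <= sub l c.
    apply: (proj2 (hsub l b)); apply: le_trans (proj1 (hsub l c)) _.
    exact: leU2.
  rewrite /symdiff leUx; apply/andP; split.
    apply: le_trans h1 _; apply: le_trans (leUl _ _) (leUl _ _).
  apply: le_trans h2 _; apply: le_trans (leUr _ _) (leUr _ _).
Qed.

End Aux.

Theorem theorem7p6 (disp : Order.disp_t) (L : tbDistrLatticeType disp)
  (sub : L -> L -> L) (hsub : is_coheyting_sub sub)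
  (a b c : nat -> L) (l : L) :
  (forall n, (c n <= b n)%O /\ (b n <= a n)%O) ->
  cconverges sub a l -> cconverges sub c l -> cconverges sub b l.
Proof.
  move=> Hn Ha Hc eps Heps.
  have [N HN] : exists N, (/ 2 ^ N < eps)%R.
    have [N HN] := pow_lt_1_zero (/2) ltac:(rewrite Rabs_pos_eq; lra) eps Heps.
    exists N; have := HN N (Nat.le_refl N).
    rewrite Rabs_pos_eq; last (apply: pow_le; lra).
    by rewrite pow_inv.
  have H2 : (0 < / 2 ^ N)%R by apply: Rinv_0_lt_compat; apply: pow_lt; lra.
  have [Na HNa] := Ha _ H2.
  have [Nc HNc] := Hc _ H2.
  exists (Na + Nc)%coq_nat => n Hnn.
  have Ea := HNa n ltac:(lia). have Ec := HNc n ltac:(lia).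
  rewrite /R_dist Rminus_0_r Rabs_pos_eq in Ea; last exact: cdist_ge0.
  rewrite /R_dist Rminus_0_r Rabs_pos_eq in Ec; last exact: cdist_ge0.
  rewrite /R_dist Rminus_0_r Rabs_pos_eq; last exact: cdist_ge0.
  have [H1 H3] := Hn n.
  have Hle := @symdiff_le _ _ _ hsub (a n) (b n) (c n) l H1 H3.
  have Pa := @dist_P _ _ sub (a n) l N Ea. have Pc' := @dist_P _ _ sub (c n) l N Ec.
  have Pb : Pc (symdiff sub (b n) l) N.
    move=> p Hp Hx; have := pf_prime Hp (pf_up Hp Hx Hle); case; [exact: Pa|exact: Pc'].
  have := @P_dist _ _ sub (b n) l N Pb.
  lra.
Qed.
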